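(* Let $X$ be a flag simplicial complex with vertex set $S$, let $W$ be the associated right-angled Coxeter group, and suppose that the radius of convergence of the growth series $W(t)$ equals $1$. Then $X$ is the join of a cross-polytope and a simplex.
   Context: Flag: every set of pairwise adjacent vertices is a face. The right-angled Coxeter group of $X$ is $W=\langle S\mid s^2=1\ (s\in S),\ st=ts\ (\{s,t\}\in X)\rangle$. Its growth series is $W(t)=\sum_{w\in W}t^{\ell(w)}$, where $\ell$ is word length with respect to $S$. The join of complexes on disjoint vertex sets is $\{\sigma\cup\tau:\sigma\in X,\tau\in Y\}$; a cross-polytope is the $k$-fold join of the complex with two vertices and no edge; a simplex is the complex of all subsets of a finite set. *)

(* Defs.v *)
From Stdlib Require Import Reals Relations ClassicalEpsilon.
From Coquelicot Require Import Coquelicot.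
From mathcomp Require Import all_boot.

Set Implicit Arguments.
Unset Strict Implicit.
Unset Printing Implicit Defensive.

Definition pdec (P : Prop) : bool :=
  if excluded_middle_informative P then true else false.

Section RACG.
Variable S : finType.

Definition simplicial_complex_on (X : {set {set S}}) : Prop :=
  set0 \in X /\
  (forall sigma tau : {set S}, tau \subset sigma -> sigma \in X -> tau \in X) /\
  (forall s : S, [set s] \in X).

Definition flag (X : {set {set S}}) : Prop :=
  forall sigma : {set S},
    (forall s t, s \in sigma -> t \in sigma -> s != t -> [set s; t] \in X) ->
    sigma \in X.

(* Elementary moves of words over S coming from the presentation
   <S | s^2 = 1, st = ts ({s,t} in X)>. *)
Inductive rstep (X : {set {set S}}) : seq S -> seq S -> Prop :=
| rstep_del (u v : seq S) (s : S) : rstep X (u ++ s :: s :: v) (u ++ v)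
| rstep_comm (u v : seq S) (s t : S) :
    [set s; t] \in X -> rstep X (u ++ s :: t :: v) (u ++ t :: s :: v).

(* Two words represent the same element of W. *)
Definition wequiv (X : {set {set S}}) : relation (seq S) :=
  clos_refl_sym_trans (seq S) (rstep X).

Definition reduced (X : {set {set S}}) (w : seq S) : Prop :=
  forall w', wequiv X w w' -> (size w <= size w')%N.

(* Number of elements of W of word length n: the number of classes of
   reduced words of length n. *)
Definition growth_coef (X : {set {set S}}) (n : nat) : nat :=
  #|[set [set v : n.-tuple S | pdec (wequiv X (val v) (val w))]
     | w in [set w : n.-tuple S | pdec (reduced X (val w))]]|.

Definition cjoin (Y Z : {set {set S}}) : {set {set S}} :=
  [set sigma :|: tau | sigma in Y, tau in Z].

Definition cverts (Y : {set {set S}}) : {set S} := \bigcup_(sigma in Y) sigma.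

Definition two_points (a b : S) : {set {set S}} := [set set0; [set a]; [set b]].

(* k-fold join of two-point complexes (k = 0 gives the empty complex {∅}). *)
Inductive cross_polytope : {set {set S}} -> Prop :=
| cross_nil : cross_polytope [set set0]
| cross_cons (Y : {set {set S}}) (a b : S) :
    a != b -> a \notin cverts Y -> b \notin cverts Y ->
    cross_polytope Y -> cross_polytope (cjoin (two_points a b) Y).

Definition simplex (V : {set S}) : {set {set S}} := powerset V.

End RACG.

(* Main.v *)
Require Import Defs.
From Stdlib Require Import Reals Relations ClassicalEpsilon Lra.
From Coquelicot Require Import Coquelicot.
From mathcomp Require Import all_boot.
Open Scope nat_scope.
Set Implicit Arguments.
Unset Strict Implicit.
Unset Printing Implicit Defensive.
Ltac bruteb := repeat match goal with b : bool |- _ => destruct b end.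

Inductive sym := SA | SV of bool & bool.
Definition hdSA L := match L with SA :: _ => true | _ => false end.
Definition hdSV L := match L with SV _ _ :: _ => true | _ => false end.
Fixpoint valid L := match L with
  | [::] => true
  | SA :: L' => ~~ hdSA L' && valid L'
  | SV p q :: L' => [&& (p || q), ~~ hdSV L' & valid L'] end.
Definition pushA L := match L with SA :: L' => L' | _ => SA :: L end.
Definition pushV x y L := match L with
  | SV p q :: L' => if xorb p x || xorb q y then SV (xorb p x) (xorb q y) :: L' else L'
  | _ => SV x y :: L end.

Lemma pushA_valid L : valid L -> valid (pushA L).
Proof. by case: L => [|[|p q] [|[|p' q'] L]] //=; bruteb. Qed.
Lemma pushV_valid x y L : x || y -> valid L -> valid (pushV x y L).
Proof.
by case: L => [|[|p q] [|[|p' q'] L]] //=; bruteb; rewrite /= ?andbT.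
Qed.
Lemma pushAA L : valid L -> pushA (pushA L) = L.
Proof. by case: L => [|[|p q] [|[|p' q'] L]]. Qed.
Lemma pushVV x y L : valid L -> pushV x y (pushV x y L) = L.
Proof.
by case: L => [|[|p q] [|[|p' q'] L]] //=; bruteb; rewrite /=.
Qed.
Lemma pushVC x y x' y' L : x || y -> x' || y' -> valid L -> pushV x y (pushV x' y' L) = pushV x' y' (pushV x y L).
Proof.
by case: L => [|[|p q] [|[|p1 q1] L]] //=; bruteb; rewrite /=.
Qed.
Lemma pushA_size L : size (pushA L) <= (size L).+1.
Proof. by case: L => [|[|p q] L] //=; apply: leqW. Qed.
Lemma pushV_size x y L : size (pushV x y L) <= (size L).+1.
Proof. case: L => [|[|p q] L] //=; case: ifP => //= _; apply: leqW; exact: leqnSn. Qed.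

Definition act (S : finType) (a b c : S) (s : S) L :=
  if s == a then pushA L else if s == b then pushV true false L
  else if s == c then pushV false true L else L.
Definition nf (S : finType) (a b c : S) (w : seq S) :=
  foldl (fun L s => act a b c s L) [::] w.

Lemma act_valid (S : finType) (a b c s : S) L : valid L -> valid (act a b c s L).
Proof.
rewrite /act => vL; case: ifP => _; first exact: pushA_valid.
by case: ifP => _; [|case: ifP => _ //]; exact: pushV_valid.
Qed.

Lemma actK (S : finType) (a b c s : S) L : valid L -> act a b c s (act a b c s L) = L.
Proof.
rewrite /act => vL; case: (s == a); first exact: pushAA.
by case: (s == b); [|case: (s == c) => //]; exact: pushVV.
Qed.

Lemma act_a (S : finType) (a b c : S) : act a b c a = pushA.
Proof. by rewrite /act eqxx. Qed.
Lemma act_b (S : finType) (a b c : S) : a != b -> act a b c b = pushV true false.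
Proof. by move=> ab; rewrite /act eq_sym (negbTE ab) eqxx. Qed.
Lemma act_c (S : finType) (a b c : S) : a != c -> b != c -> act a b c c = pushV false true.
Proof. by move=> ac bc; rewrite /act eq_sym (negbTE ac) eq_sym (negbTE bc) eqxx. Qed.

Lemma actC (S : finType) (X : {set {set S}}) (a b c s t : S) L :
  a != b -> a != c -> b != c ->
  [set a; b] \notin X -> [set a; c] \notin X ->
  [set s; t] \in X -> valid L -> act a b c s (act a b c t L) = act a b c t (act a b c s L).
Proof.
move=> ab ac bc nab nac st vL.
have Hs: forall u, u != a -> u != b -> u != c -> act a b c u =1 id.
  by move=> u ua ub uc L'; rewrite /act (negbTE ua) (negbTE ub) (negbTE uc).
have [sa|sa] := eqVneq s a.
  have [ta|ta] := eqVneq t a; first by rewrite sa ta.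
  have [tb|tb] := eqVneq t b; first by move: st; rewrite sa tb (negbTE nab).
  have [tc|tc] := eqVneq t c; first by move: st; rewrite sa tc (negbTE nac).
  by rewrite !(Hs t ta tb tc).
have [sb|sb] := eqVneq s b.
  have [ta|ta] := eqVneq t a; first by move: st; rewrite sb ta setUC (negbTE nab).
  have [tb|tb] := eqVneq t b; first by rewrite sb tb.
  have [tc|tc] := eqVneq t c.
    by rewrite sb tc act_b // act_c // pushVC.
  by rewrite !(Hs t ta tb tc).
have [sc|sc] := eqVneq s c.
  have [ta|ta] := eqVneq t a; first by move: st; rewrite sc ta setUC (negbTE nac).
  have [tb|tb] := eqVneq t b.
    by rewrite sc tb act_b // act_c // pushVC.
  have [tc|tc] := eqVneq t c; first by rewrite sc tc.
  by rewrite !(Hs t ta tb tc).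
by rewrite !(Hs s sa sb sc).
Qed.

Lemma foldl_valid (S : finType) (a b c : S) L w :
  valid L -> valid (foldl (fun L s => act a b c s L) L w).
Proof. by elim: w L => //= s w IH L vL; apply: IH; apply: act_valid. Qed.

Lemma foldl_size (S : finType) (a b c : S) L w :
  size (foldl (fun L s => act a b c s L) L w) <= size L + size w.
Proof.
elim: w L => [|s w IH] L /=; first by rewrite addn0.
apply: leq_trans (IH _) _; rewrite addnS -addSn leq_add2r /act.
case: ifP => _; first exact: pushA_size.
by case: ifP => _; [|case: ifP => _ //]; exact: pushV_size.
Qed.

Lemma wequiv_nf (S : finType) (X : {set {set S}}) (a b c : S) w w' :
  a != b -> a != c -> b != c ->
  [set a; b] \notin X -> [set a; c] \notin X ->
  wequiv X w w' -> nf a b c w = nf a b c w'.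
Proof.
move=> ab ac bc nab nac; elim => {w w'} [w w' st||w w' _ -> //|w1 w2 w3 _ -> _ -> //].
- case: st => [u v s|u v s t Hst]; rewrite /nf !foldl_cat /=.
    by rewrite actK //; apply: foldl_valid.
  by rewrite (actC ab ac bc nab nac Hst) //; apply: foldl_valid.
- by [].
Qed.

Fixpoint wd (S : finType) (a b c : S) (ys : seq bool) : seq S :=
  match ys with [::] => [::] | y :: ys => wd a b c ys ++ [:: a; if y then b else c] end.
Fixpoint code (ys : seq bool) : seq sym :=
  match ys with [::] => [::] | y :: ys => (if y then SV true false else SV false true) :: SA :: code ys end.

Lemma size_wd (S : finType) (a b c : S) ys : size (wd a b c ys) = (size ys).*2.
Proof. by elim: ys => //= y ys IH; rewrite size_cat IH /= addn2. Qed.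
Lemma size_code ys : size (code ys) = (size ys).*2.
Proof. by elim: ys => //= y ys ->. Qed.
Lemma code_inj : injective code.
Proof. by elim=> [|y ys IH] [|z zs] //= [] + /IH ->; case: y; case: z. Qed.

Lemma nf_wd (S : finType) (a b c : S) ys : a != b -> a != c -> b != c ->
  nf a b c (wd a b c ys) = code ys.
Proof.
move=> ab ac bc; elim: ys => //= y ys IH.
rewrite /nf foldl_cat -/(nf a b c _) IH /= /act eqxx.
have ->: pushA (code ys) = SA :: code ys by case: ys {IH} => //; case.
case: y; rewrite eq_sym ?(negbTE ab) ?(negbTE ac) ?eqxx //=.
by rewrite eq_sym (negbTE bc).
Qed.

Lemma pdecP (P : Prop) : pdec P <-> P.
Proof. by rewrite /pdec; case: excluded_middle_informative. Qed.

Lemma growth_lower (S : finType) (X : {set {set S}}) (a b c : S) m :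
  a != b -> a != c -> b != c ->
  [set a; b] \notin X -> [set a; c] \notin X ->
  2 ^ m <= growth_coef X m.*2.
Proof.
move=> ab ac bc nab nac.
have szw (ys : m.-tuple bool) : size (wd a b c ys) == m.*2 by rewrite size_wd size_tuple.
pose mk (ys : m.-tuple bool) : (m.*2).-tuple S := Tuple (szw ys).
have red ys : reduced X (val (mk ys)).
  move=> w' eqw /=; rewrite size_wd size_tuple.
  have := foldl_size a b c [::] w'; rewrite -/(nf a b c w') -(wequiv_nf ab ac bc nab nac eqw).
  by rewrite nf_wd // size_code size_tuple.
pose F ys := [set v : (m.*2).-tuple S | pdec (wequiv X (val v) (val (mk ys)))].
have Finj : injective F.
  move=> ys zs eF.
  have : mk ys \in F zs by rewrite -eF inE; apply/pdecP; apply: rst_refl.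
  rewrite inE => /pdecP /= /(wequiv_nf ab ac bc nab nac).
  by rewrite !nf_wd // => /code_inj /val_inj.
have -> : 2 ^ m = #|F @: [set: m.-tuple bool]|.
  by rewrite card_imset // cardsT card_tuple card_bool.
apply: subset_leq_card; apply/subsetP => _ /imsetP [ys _ ->].
apply/imsetP; exists (mk ys) => //.
by rewrite inE; apply/pdecP; apply: red.
Qed.

Lemma flag_union (S : finType) (X : {set {set S}}) (sigma rho : {set S}) :
  simplicial_complex_on X -> flag X -> sigma \in X ->
  (forall s t, s \in rho -> t \in sigma :|: rho -> s != t -> [set s; t] \in X) ->
  sigma :|: rho \in X.
Proof.
move=> [_ [sub _]] fl sX H; apply: fl => s t sU tU st.
case sr: (s \in rho); first exact: H.
case tr: (t \in rho); first by rewrite setUC; apply: H => //; rewrite eq_sym.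
move: sU tU; rewrite !inE sr tr !orbF => ss ts.
apply: sub sX; apply/subsetP => x; rewrite !inE => /orP [] /eqP ->//.
Qed.

Definition YD (S : finType) (X : {set {set S}}) (D : {set S}) :=
  [set sigma in X | sigma \subset D].

Lemma cverts_YD (S : finType) (X : {set {set S}}) D : cverts (YD X D) \subset D.
Proof. by apply/subsetP => x /bigcupP [sigma]; rewrite inE => /andP [_ /subsetP]; apply. Qed.

Lemma crossD (S : finType) (X : {set {set S}}) :
  simplicial_complex_on X -> flag X ->
  (forall s t u, [set s; t] \notin X -> [set s; u] \notin X -> t = u) ->
  forall n (D : {set S}), #|D| <= n ->
  (forall s, s \in D -> exists t, [set s; t] \notin X) ->
  (forall s t, s \in D -> [set s; t] \notin X -> t \in D) ->
  cross_polytope (YD X D).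
Proof.
move=> sc fl H; have [X0 [sub X1]] := sc.
elim=> [|n IH] D.
  rewrite leqn0 cards_eq0 => /eqP -> _ _.
  have -> : YD X set0 = [set set0]; last exact: cross_nil.
  apply/setP => sigma; rewrite !inE subset0; apply/andP/idP => [[]//|/eqP->].
  by split.
move=> cD DP Dcl.
have [Dz|[a aD]] := set_0Vmem D.
  by apply: (IH D) => //; rewrite Dz cards0.
have [b nab] := DP a aD.
have bD := Dcl _ _ aD nab.
have ab : a != b by apply: contraNneq nab => <-; rewrite setUid X1.
pose D' := D :\ a :\ b.
have D'D : D' \subset D by rewrite /D'; apply/subsetP => x; rewrite !inE => /and3P [].
have cD' : #|D'| <= n.
  rewrite -ltnS; apply: leq_trans cD; apply: proper_card; rewrite properEneq D'D andbT.
  by apply/eqP => e; move: aD; rewrite -e !inE eqxx andbF.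
have Hab t : t \in D' -> [set a; t] \in X.
  rewrite !inE => /and3P [tb ta _]; apply: contraR tb => nt.
  by rewrite (H _ _ _ nt nab).
have Hba t : t \in D' -> [set b; t] \in X.
  rewrite !inE => /and3P [tb ta _]; apply: contraR ta => nt.
  by rewrite (H b t a nt) //; rewrite setUC.
have IH' := IH D' cD'.
have -> : YD X D = cjoin (two_points a b) (YD X D').
  apply/setP => sigma; apply/idP/idP.
    rewrite inE => /andP [sX sD].
    have nboth : ~~ ((a \in sigma) && (b \in sigma)).
      apply/negP => /andP [asg bsg]; move: nab; rewrite (sub sigma) //.
      by apply/subsetP => x; rewrite !inE => /orP [] /eqP ->.
    have tauin : sigma :\ a :\ b \in YD X D'.
      rewrite inE; apply/andP; split.
        by apply: (sub sigma) => //; apply/subsetP => x; rewrite !inE => /and3P [].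
      apply/subsetP => x; rewrite !inE => /and3P [-> -> xs] /=.
      exact: (subsetP sD).
    apply/imset2P.
    case asg: (a \in sigma).
      apply: (@Imset2spec _ _ _ _ _ _ _ [set a] (sigma :\ a :\ b)); first by rewrite !inE eqxx orbT.
      exact: tauin.
      apply/setP => x; rewrite !inE.
      have [->|xa] := eqVneq x a; first by rewrite asg.
      have [->|xb] := eqVneq x b => //=.
      by move: nboth; rewrite asg /= => /negbTE ->.
    case bsg: (b \in sigma).
      apply: (@Imset2spec _ _ _ _ _ _ _ [set b] (sigma :\ a :\ b)); first by rewrite !inE eqxx !orbT.
      exact: tauin.
      apply/setP => x; rewrite !inE.
      have [->|xb] := eqVneq x b; first by rewrite bsg.
      have [->|xa] := eqVneq x a => //=.
    apply: (@Imset2spec _ _ _ _ _ _ _ set0 (sigma :\ a :\ b)); first by rewrite !inE eqxx.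
    exact: tauin.
    apply/setP => x; rewrite !inE.
    have [->|xb] := eqVneq x b; first by rewrite bsg.
    have [->|xa] := eqVneq x a => //=.
  case/imset2P => rho tau rP tY ->.
  move: rP tY; rewrite !inE => rP /andP [tX tD'].
  have tD : tau \subset D by apply: subset_trans D'D.
  move: rP => /orP [/orP [] |] /eqP ->.
  - by rewrite set0U tX.
  - rewrite subUset sub1set aD tD !andbT setUC.
    apply: flag_union => // s t; rewrite !inE => /eqP -> /orP [/(subsetP tD')|/eqP->];
      last by rewrite eqxx.
    by move=> tin _; apply: Hab.
  - rewrite subUset sub1set bD tD !andbT setUC.
    apply: flag_union => // s t; rewrite !inE => /eqP -> /orP [/(subsetP tD')|/eqP->];
      last by rewrite eqxx.
    by move=> tin _; apply: Hba.
apply: cross_cons => //.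
- apply/negP => /(subsetP (cverts_YD X D')); by rewrite !inE eqxx andbF.
- apply/negP => /(subsetP (cverts_YD X D')); by rewrite !inE eqxx.
apply: IH'.
  by move=> s /(subsetP D'D); apply: DP.
move=> s t sD' nst; rewrite !inE.
have sD := subsetP D'D _ sD'.
rewrite (Dcl s t sD nst) andbT.
move: sD'; rewrite !inE => /and3P [sb sa _].
apply/andP; split.
  apply: contraNneq sa => tb; rewrite tb in nst.
  by apply/eqP; apply: (H b); rewrite setUC.
apply: contraNneq sb => ta; rewrite ta in nst.
apply/eqP; apply: (H a) => //; by rewrite setUC.
Qed.

Lemma join_struct (S : finType) (X : {set {set S}}) :
  simplicial_complex_on X -> flag X ->
  (forall s t u, [set s; t] \notin X -> [set s; u] \notin X -> t = u) ->
  exists (Y : {set {set S}}) (V : {set S}),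
    cross_polytope Y /\ [disjoint cverts Y & V] /\ X = cjoin Y (simplex V).
Proof.
move=> sc fl H; have [X0 [sub X1]] := sc.
pose P := [set s | [exists t, [set s; t] \notin X]].
exists (YD X P), (~: P); split; [|split].
- apply: (crossD sc fl H (leqnn #|P|)).
    by move=> s; rewrite inE => /existsP [t nt]; exists t.
  by move=> s t _ nst; rewrite inE; apply/existsP; exists s; rewrite setUC.
- rewrite disjoint_subset; apply/subsetP => x /(subsetP (cverts_YD X P)) xP.
  by rewrite !inE negbK; move: xP; rewrite inE.
apply/setP => sigma; apply/idP/idP.
  move=> sX; apply/imset2P.
  apply: (@Imset2spec _ _ _ _ _ _ _ (sigma :&: P) (sigma :\: P)).
  - rewrite inE subsetIr andbT; apply: (sub sigma) sX; exact: subsetIl.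
  - rewrite /simplex powersetE; apply/subsetP => x; rewrite !inE; by case/andP.
  - by rewrite setID.
case/imset2P => tau rho tY rV ->.
move: tY; rewrite inE => /andP [tX _].
move: rV; rewrite /simplex powersetE => rV.
apply: flag_union => // s t sr _ st.
move: (subsetP rV s sr); rewrite !inE negb_exists => /forallP /(_ t).
by rewrite negbK.
Qed.

Close Scope nat_scope.
Local Open Scope R_scope.
Lemma no_radius1 (u : nat -> R) : (forall m, Rle (pow 2 m) (u (m.*2)%N)) ->
  CV_radius u = Rbar.Finite (IZR 1) -> False.
Proof.
move=> Hu Hr.
have Hin : Rbar_lt (Rabs (3/4)) (CV_radius u).
  rewrite Hr /= Rabs_pos_eq; lra.
have := ex_series_lim_0 _ (CV_radius_inside u _ Hin).
move/is_lim_seq_Reals => /(_ R1 Rlt_0_1) [N HN].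
have hN : (N <= N.*2)%N by rewrite -addnn leq_addr.
have := HN (N.*2)%N (leP hN).
rewrite /R_dist Rminus_0_r /scal /= /mult /= pow_n_pow.
have H1 : Rle 1 (Rmult (pow (3/4) (N.*2)%N) (u (N.*2)%N)).
  apply: Rle_trans (Rmult_le_compat_l _ _ _ (pow_le _ _ _) (Hu N)); last lra.
  rewrite -mul2n pow_mult -Rpow_mult_distr; apply: pow_R1_Rle; lra.
move=> H2; have := Rle_abs (Rmult (pow (3/4) (N.*2)%N) (u (N.*2)%N)); lra.
Qed.
Close Scope R_scope.

Theorem proposition3p4p5 (S : finType) (X : {set {set S}}) :
  simplicial_complex_on X -> flag X ->
  CV_radius (fun n => INR (growth_coef X n)) = Rbar.Finite (IZR 1) ->
  exists (Y : {set {set S}}) (V : {set S}),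
    cross_polytope Y /\ [disjoint cverts Y & V] /\ X = cjoin Y (simplex V).
Proof.
move=> sc fl Hr.
have [X0 [sub X1]] := sc.
case: (boolP [exists a, exists b, exists c,
   [&& (b != c), ([set a; b] \notin X) & ([set a; c] \notin X)]]).
  case/existsP => a /existsP [b /existsP [c /and3P [bc nab nac]]].
  have ab : a != b by apply: contraNneq nab => <-; rewrite setUid X1.
  have ac : a != c by apply: contraNneq nac => <-; rewrite setUid X1.
  exfalso; apply: (no_radius1 _ Hr) => m.
  have e : forall k, INR (2 ^ k)%N = pow 2 k.
    by elim => //= k IH; rewrite expnS mult_INR IH.
  rewrite -e; apply: le_INR; apply/leP.
  exact: growth_lower m ab ac bc nab nac.
rewrite negb_exists => /forallP Hn.
apply: join_struct => // s t u nst nsu.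
apply/eqP; apply: contraTT (Hn s) => tu.
rewrite negbK; apply/existsP; exists t; apply/existsP; exists u.
by rewrite tu nst nsu.
Qed.
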